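(* Let $M$ be a dihedral axial decomposition algebra of Majorana type $(\eta,\eta)$ over a field $\mathbb{F}$ with $\operatorname{char}\mathbb{F}\neq2$, where $\eta\in\mathbb{F}\setminus\{0,1,\tfrac12\}$, with generating axes $(a_i)_{i\in\mathbb{Z}}$. Let $x,y,z\in M$ satisfy (i) $g(x)=x$ for all $g\in G$; (ii) $f_3(y)=y$, $\tau_0\circ f_1(y)=f_2(y)$ and $\tau_0(y)=y$; (iii) $\tau_0(z)=z$ and $\tau_0\circ f_1(z)=f_1(z)$; (iv) $x+y+z+\sum_{i=1}^k\alpha_i(a_i+a_{-i})+\alpha_0a_0=0$ for some $\alpha_0,\dots,\alpha_k\in\mathbb{F}$. Set $\alpha_i=0$ for $i>k$. Then: (1) $\alpha_k(a_{k+2}-a_{-k-2})+\sum_{i=1}^{k+1}(\alpha_{i-2}+\alpha_{i-1}-\alpha_{i+1}-\alpha_{i+2})(a_i-a_{-i})=0$, where $\alpha_{-1}=\alpha_1$. Thus if $\alpha_k\neq0$, then $\operatorname{adim}\le2k+4$, and if $\operatorname{adim}=2k+4$ then $M$ satisfies an odd relation. (2) If $y=0$, then $\alpha_k(a_{k+1}-a_{-k-1})+\sum_{i=1}^k(\alpha_{i-1}-\alpha_{i+1})(a_i-a_{-i})=0$. Thus if $\alpha_k\neq0$, then $\operatorname{adim}\le2k+2$, and if $\operatorname{adim}=2k+2$ then $M$ satisfies an odd relation. (3) If $y=z=0$, then $\alpha_k(a_{k+1}-a_{-k})+\sum_{i=0}^{k-1}(\alpha_i-\alpha_{i+1})(a_{i+1}-a_{-i})=0$.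 Thus if $\alpha_k\neq0$, then $\operatorname{adim}\le2k+1$, and if $\operatorname{adim}=2k+1$ then $M$ satisfies an odd relation.
   Context: $M$ is a commutative nonassociative $\mathbb{F}$-algebra. With $\Phi(0)=0,\Phi(1)=1,\Phi(2)=\Phi(3)=\eta$, an axis $a\in M$ is an element together with a decomposition $M=\bigoplus_{i=0}^3M^i(a)$ such that $xa=\Phi(i)x$ for $x\in M^i(a)$, $M^1(a)=\mathbb{F}a$, and $M^0(a)M^i(a)\subset M^i(a)$ for all $i$, $M^2(a)M^2(a)\subset M^0(a)\oplus M^1(a)$, $M^2(a)M^3(a)\subset M^3(a)$, $M^3(a)M^3(a)\subset M^0(a)\oplus M^1(a)\oplus M^2(a)$. The Miyamoto involution $\tau(a)$ is the automorphism acting as $1$ on $M^0(a)\oplus M^1(a)\oplus M^2(a)$ and $-1$ on $M^3(a)$. $M$ is dihedral (of Majorana type $(\eta,\eta)$) with axes $(a_i)_{i\in\mathbb{Z}}$ if: $M$ is generated by the $a_i$; $a_i\mapsto a_{i+1}$ extends to an automorphism of $M$; and $\tau(a_j)(a_i)=a_{2j-i}$ for all $i,j$. Notation: $f_i$ is the automorphism with $f_i(a_j)=a_{i+j}$ for all $j$; $\tau_0=\tau(a_0)$; $G=\langle f_1,\tau_0\rangle$. The axial dimension $\operatorname{adim}$ is $\dim_{\mathbb{F}}\operatorname{Span}\{a_i:i\in\mathbb{Z}\}$. $M$ satisfies an odd relation if either $\operatorname{adim}=2m$ and there are $\beta_1,\dots,\beta_m\in\mathbb{F}$ with $\beta_m\neq0$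 and $\sum_{i=1}^m\beta_i(a_i-a_{-i})=0$, or $\operatorname{adim}=2m+1$ and there are $\beta_0,\dots,\beta_m\in\mathbb{F}$ with $\beta_m\neq0$ and $\sum_{i=0}^m\beta_i(a_{i+1}-a_{-i})=0$. *)

(* Defs.v *)
From HB Require Import structures.
From mathcomp Require Import all_boot all_order all_algebra.
Set Implicit Arguments. Unset Strict Implicit. Unset Printing Implicit Defensive.
Import GRing.Theory.
Local Open Scope ring_scope.

Definition comm_bilinear (F : fieldType) (M : lmodType F) (mul : M -> M -> M) :=
  (forall u v, mul u v = mul v u) /\
  (forall c u v w, mul (c *: u + v) w = c *: mul u w + mul v w).

Definition is_subspace (F : fieldType) (M : lmodType F) (S : M -> Prop) :=
  S 0 /\ (forall u v, S u -> S v -> S (u + v)) /\ (forall c u, S u -> S (c *: u)).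

(* Axis: W j = M^j(a) for j = 0,1,2,3; Phi(0)=0, Phi(1)=1, Phi(2)=Phi(3)=eta. *)
Definition is_axis (F : fieldType) (M : lmodType F) (mul : M -> M -> M)
    (eta : F) (a : M) (W : nat -> M -> Prop) :=
  (forall j, (j < 4)%N -> is_subspace (W j)) /\
  (forall u, exists u0 u1 u2 u3,
      [/\ W 0%N u0, W 1%N u1, W 2%N u2 & W 3%N u3] /\ u = u0 + u1 + u2 + u3) /\
  (forall u0 u1 u2 u3, W 0%N u0 -> W 1%N u1 -> W 2%N u2 -> W 3%N u3 ->
      u0 + u1 + u2 + u3 = 0 -> [/\ u0 = 0, u1 = 0, u2 = 0 & u3 = 0]) /\
  (forall u, W 0%N u -> mul u a = 0) /\
  (forall u, W 1%N u -> mul u a = u) /\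
  (forall u, W 2%N u -> mul u a = eta *: u) /\
  (forall u, W 3%N u -> mul u a = eta *: u) /\
  (forall u, W 1%N u <-> exists c : F, u = c *: a) /\
  (forall j u v, (j < 4)%N -> W 0%N u -> W j v -> W j (mul u v)) /\
  (forall u v, W 2%N u -> W 2%N v ->
      exists w0 w1, W 0%N w0 /\ W 1%N w1 /\ mul u v = w0 + w1) /\
  (forall u v, W 2%N u -> W 3%N v -> W 3%N (mul u v)) /\
  (forall u v, W 3%N u -> W 3%N v ->
      exists w0 w1 w2, [/\ W 0%N w0, W 1%N w1 & W 2%N w2] /\ mul u v = w0 + w1 + w2).

(* [miyamoto W u w] : tau(a)(u) = w, where tau(a) acts as 1 on M^0+M^1+M^2
   and as -1 on M^3 (W the decomposition attached to the axis a). *)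
Definition miyamoto (F : fieldType) (M : lmodType F) (W : nat -> M -> Prop)
    (u w : M) :=
  exists u0 u1 u2 u3, [/\ W 0%N u0, W 1%N u1, W 2%N u2 & W 3%N u3] /\
    u = u0 + u1 + u2 + u3 /\ w = u0 + u1 + u2 - u3.

Definition is_auto (F : fieldType) (M : lmodType F) (mul : M -> M -> M)
    (f : M -> M) :=
  (forall c u v, f (c *: u + v) = c *: f u + f v) /\ bijective f /\
  (forall u v, f (mul u v) = mul (f u) (f v)).

Definition generated_by (F : fieldType) (M : lmodType F) (mul : M -> M -> M)
    (a : int -> M) :=
  forall S : M -> Prop, is_subspace S -> (forall u v, S u -> S v -> S (mul u v)) ->
    (forall i, S (a i)) -> forall u, S u.

Definition dihedral (F : fieldType) (M : lmodType F) (mul : M -> M -> M)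
    (eta : F) (a : int -> M) (V : int -> nat -> M -> Prop) :=
  [/\ generated_by mul a,
      (exists f, is_auto mul f /\ forall i, f (a i) = a (i + 1)),
      (forall i, is_axis mul eta (a i) (V i)) &
      (forall i j, miyamoto (V j) (a i) (a (2 * j - i)))].

Inductive in_gen_group (M : Type) (gens : (M -> M) -> Prop) : (M -> M) -> Prop :=
  | gg_id : in_gen_group gens id
  | gg_gen : forall g, gens g -> in_gen_group gens g
  | gg_comp : forall g h, in_gen_group gens g -> in_gen_group gens h ->
      in_gen_group gens (g \o h)
  | gg_inv : forall g h, in_gen_group gens g -> cancel g h -> cancel h g ->
      in_gen_group gens h.

Definition in_span_a (F : fieldType) (M : lmodType F) (a : int -> M) (u : M) :=
  exists (s : seq int) (c : int -> F), u = \sum_(i <- s) c i *: a i.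

Definition adim_is (F : fieldType) (M : lmodType F) (a : int -> M) (n : nat) :=
  exists b : 'I_n -> M,
    (forall c : 'I_n -> F, \sum_(l < n) c l *: b l = 0 -> forall l, c l = 0) /\
    (forall l, in_span_a a (b l)) /\
    (forall j, exists c : 'I_n -> F, a j = \sum_(l < n) c l *: b l).

Definition adim_le (F : fieldType) (M : lmodType F) (a : int -> M) (N : nat) :=
  exists n, (n <= N)%N /\ adim_is a n.

Definition odd_relation (F : fieldType) (M : lmodType F) (a : int -> M) :=
  (exists m : nat, (0 < m)%N /\ adim_is a (2 * m) /\
     exists beta : nat -> F, beta m != 0 /\
       \sum_(1 <= i < m.+1) beta i *: (a (i%:Z) - a (- i%:Z)) = 0) \/
  (exists m : nat, adim_is a (2 * m).+1 /\
     exists beta : nat -> F, beta m != 0 /\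
       \sum_(0 <= i < m.+1) beta i *: (a (i%:Z + 1) - a (- i%:Z)) = 0).

(* Main.v *)
Require Import Defs.
From HB Require Import structures.
From mathcomp Require Import all_boot all_order all_algebra.
From mathcomp Require Import zify ring.
From Stdlib Require Import Classical.
Set Implicit Arguments. Unset Strict Implicit.
Import GRing.Theory.
Local Open Scope ring_scope.

Definition dual (F : fieldType) (M : lmodType F) := (F * M)%type.
Arguments dual {F} M.
HB.instance Definition _ (F : fieldType) (M : lmodType F) := GRing.Zmodule.on (dual M).
Definition dmul (F : fieldType) (M : lmodType F) (x y : dual M) : dual M :=
  (x.1 * y.1, x.1 *: y.2 + y.1 *: x.2).
Definition done_ (F : fieldType) (M : lmodType F) : dual M := (1, 0).
Lemma dmulA (F : fieldType) (M : lmodType F) : associative (@dmul F M).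
Proof.
move=> [a u] [b v] [c w]; rewrite /dmul /=; congr (_, _); first by rewrite mulrA.
rewrite !scalerDr !scalerA addrA; congr (_ + _); first by rewrite (mulrC c a).
by rewrite mulrC.
Qed.
Lemma dmulC (F : fieldType) (M : lmodType F) : commutative (@dmul F M).
Proof. by move=> [a u] [b v]; rewrite /dmul /= mulrC addrC. Qed.
Lemma dmul1 (F : fieldType) (M : lmodType F) : left_id (@done_ F M) (@dmul F M).
Proof. by move=> [a u]; rewrite /dmul /= mul1r scale1r scaler0 addr0. Qed.
Lemma dmulD (F : fieldType) (M : lmodType F) : left_distributive (@dmul F M) +%R.
Proof.
move=> [a u] [b v] [c w]; rewrite /dmul /=; congr (_, _); first by rewrite mulrDl.
by rewrite scalerDl scalerDr addrACA.
Qed.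
HB.instance Definition _ (F : fieldType) (M : lmodType F) :=
  GRing.Zmodule_isComPzRing.Build (dual M) (@dmulA F M) (@dmulC F M) (@dmul1 F M) (@dmulD F M).

Definition iota (F : fieldType) (M : lmodType F) (u : M) : dual M := (0, u).
Definition kap (F : fieldType) (M : lmodType F) (c : F) : dual M := (c, 0).


Arguments iota {F M} u.
Arguments kap {F} M c.
Lemma iota_inj (F : fieldType) (M : lmodType F) (u v : M) : iota u = iota v -> u = v.
Proof. by case. Qed.
Lemma iotaD (F : fieldType) (M : lmodType F) (u v : M) : iota (u + v) = iota u + iota v.
Proof. by rewrite /iota; congr (_, _); rewrite addr0. Qed.
Lemma iotaN (F : fieldType) (M : lmodType F) (u : M) : iota (- u) = - iota u.
Proof. by rewrite /iota; congr (_, _); rewrite oppr0. Qed.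
Lemma iota0 (F : fieldType) (M : lmodType F) : iota (0 : M) = 0.
Proof. by []. Qed.
Lemma iotaZ (F : fieldType) (M : lmodType F) (c : F) (u : M) : iota (c *: u) = kap M c * iota u.
Proof. by rewrite /iota /kap; rewrite /GRing.mul /= /dmul /= mulr0 scaler0 addr0. Qed.
Lemma kapD (F : fieldType) (M : lmodType F) (c d : F) : kap M (c + d) = kap M c + kap M d.
Proof. by rewrite /kap; congr (_, _); rewrite addr0. Qed.
Lemma kapN (F : fieldType) (M : lmodType F) (c : F) : kap M (- c) = - kap M c.
Proof. by rewrite /kap; congr (_, _); rewrite oppr0. Qed.
Lemma kapM (F : fieldType) (M : lmodType F) (c d : F) : kap M (c * d) = kap M c * kap M d.
Proof. by rewrite /kap /GRing.mul /= /dmul /= !scaler0 addr0. Qed.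
Lemma kap1 (F : fieldType) (M : lmodType F) : kap M 1 = 1.
Proof. by []. Qed.
Lemma kap0 (F : fieldType) (M : lmodType F) : kap M 0 = 0.
Proof. by []. Qed.

Ltac mring := apply: iota_inj; rewrite ?(iotaD, iotaN, iotaZ, iota0, kapD, kapN, kapM, kap1, kap0); ring.


Definition lin (F : fieldType) (M : lmodType F) (h : M -> M) :=
  forall c u v, h (c *: u + v) = c *: h u + h v.

Lemma lin0 (F : fieldType) (M : lmodType F) (h : M -> M) : lin h -> h 0 = 0.
Proof.
move=> H; have e := H 1 0 0; rewrite !scale1r !addr0 in e.
by apply: (addrI (h 0)); rewrite addr0 -e.
Qed.
Lemma linD (F : fieldType) (M : lmodType F) (h : M -> M) u v : lin h -> h (u + v) = h u + h v.
Proof. by move=> H; have := H 1 u v; rewrite !scale1r. Qed.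
Lemma linZ (F : fieldType) (M : lmodType F) (h : M -> M) c u : lin h -> h (c *: u) = c *: h u.
Proof. by move=> H; have := H c u 0; rewrite (lin0 H) !addr0. Qed.
Lemma linN (F : fieldType) (M : lmodType F) (h : M -> M) u : lin h -> h (- u) = - h u.
Proof. by move=> H; rewrite -scaleN1r linZ // scaleN1r. Qed.
Lemma linB (F : fieldType) (M : lmodType F) (h : M -> M) u v : lin h -> h (u - v) = h u - h v.
Proof. by move=> H; rewrite linD // linN. Qed.
Lemma lin_sum (F : fieldType) (M : lmodType F) (h : M -> M) (I : Type) (r : seq I) (P : pred I) (G : I -> M) :
  lin h -> h (\sum_(i <- r | P i) G i) = \sum_(i <- r | P i) h (G i).
Proof. by move=> H; apply: (big_morph h (fun u v => linD u v H) (lin0 H)). Qed.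

Lemma by_diff (F : fieldType) (M : lmodType F) (u v u' v' : M) :
  u - v = u' - v' -> u' = v' -> u = v.
Proof. by move=> h e; apply/eqP; rewrite -subr_eq0 h e subrr. Qed.

Definition spanb (F : fieldType) (M : lmodType F) (b : nat -> M) (n : nat) (u : M) :=
  exists c : nat -> F, u = \sum_(l < n) c l *: b l.

Lemma sp0 (F : fieldType) (M : lmodType F) (b : nat -> M) n : spanb b n 0.
Proof. by exists (fun _ => 0); rewrite big1 // => l _; rewrite scale0r. Qed.
Lemma spD (F : fieldType) (M : lmodType F) (b : nat -> M) n u v :
  spanb b n u -> spanb b n v -> spanb b n (u + v).
Proof.
move=> [c ->] [d ->]; exists (fun l => c l + d l); rewrite -big_split /=.
by apply: eq_bigr => l _; rewrite scalerDl.
Qed.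
Lemma spZ (F : fieldType) (M : lmodType F) (b : nat -> M) n e u :
  spanb b n u -> spanb b n (e *: u).
Proof.
move=> [c ->]; exists (fun l => e * c l); rewrite scaler_sumr.
by apply: eq_bigr => l _; rewrite scalerA.
Qed.
Lemma spN (F : fieldType) (M : lmodType F) (b : nat -> M) n u :
  spanb b n u -> spanb b n (- u).
Proof. by move=> h; rewrite -scaleN1r; apply: spZ. Qed.
Lemma spB (F : fieldType) (M : lmodType F) (b : nat -> M) n u v :
  spanb b n u -> spanb b n v -> spanb b n (u - v).
Proof. by move=> h1 h2; apply: spD => //; apply: spN. Qed.
Lemma sp_sum (F : fieldType) (M : lmodType F) (b : nat -> M) N (I : Type) (r : seq I) (P : pred I) (G : I -> M) :
  (forall i, P i -> spanb b N (G i)) -> spanb b N (\sum_(i <- r | P i) G i).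
Proof. move=> h; apply: big_ind => //; [exact: sp0 | exact: spD]. Qed.
Lemma sp_sum_nat (F : fieldType) (M : lmodType F) (b : nat -> M) N m n (G : nat -> M) :
  (forall i, (m <= i < n)%N -> spanb b N (G i)) -> spanb b N (\sum_(m <= i < n) G i).
Proof.
move=> h; rewrite big_seq; apply: sp_sum => i; rewrite mem_index_iota; exact: h.
Qed.
Lemma sp_b (F : fieldType) (M : lmodType F) (b : nat -> M) N n :
  (n < N)%N -> spanb b N (b n).
Proof.
move=> hn; exists (fun l => if l == n then 1 else 0).
rewrite (bigD1 (Ordinal hn)) //= eqxx scale1r big1 ?addr0 // => l hl.
have -> : (nat_of_ord l == n) = false.
  by apply/negbTE; apply: contra hl => /eqP e; apply/eqP; apply: val_inj.
by rewrite scale0r.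
Qed.
Lemma sp_trans (F : fieldType) (M : lmodType F) (b b' : nat -> M) N n u :
  (forall i, (i < N)%N -> spanb b' n (b i)) -> spanb b N u -> spanb b' n u.
Proof.
move=> h [c ->]; apply: sp_sum => i _; apply: spZ; exact: h.
Qed.
Lemma sp_solve (F : fieldType) (M : lmodType F) (b : nat -> M) N (al : F) p q X :
  al != 0 -> al *: (p - q) + X = 0 -> spanb b N q -> spanb b N X -> spanb b N p.
Proof.
move=> hal e hq hX.
have -> : p = q + al^-1 *: (al *: (p - q)) by rewrite scalerA mulVf // scale1r addrC subrK.
have -> : al *: (p - q) = - X by apply/eqP; rewrite -addr_eq0 e.
by apply: spD => //; apply: spZ; apply: spN.
Qed.
Lemma sp_solve' (F : fieldType) (M : lmodType F) (b : nat -> M) N (al : F) p q X :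
  al != 0 -> al *: (p - q) + X = 0 -> spanb b N p -> spanb b N X -> spanb b N q.
Proof.
move=> hal e hp hX; apply: (@sp_solve _ _ _ _ (- al) q p X) => //.
  by rewrite oppr_eq0.
by rewrite -e; mring.
Qed.

Lemma extract (F : fieldType) (M : lmodType F) (v : nat -> M) N :
  exists n (b : nat -> M), (n <= N)%N /\
    (forall l, (l < n)%N -> exists i, (i < N)%N /\ b l = v i) /\
    (forall c : nat -> F, \sum_(l < n) c l *: b l = 0 -> forall l, (l < n)%N -> c l = 0) /\
    (forall i, (i < N)%N -> spanb b n (v i)).
Proof.
elim: N => [|N [n [b [hn [hb [hind hsp]]]]]].
  exists 0%N, v; split => //; split => // c _ l //.
have [hv|hv] := classic (spanb b n (v N)).
  exists n, b; split; first by apply: leqW.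
  split; first by move=> l /hb [i [hi ->]]; exists i; split => //; apply: ltnW.
  split => // i; rewrite ltnS leq_eqVlt => /orP [/eqP -> //|]; exact: hsp.
pose b' := fun l => if l == n then v N else b l.
have hext : forall u, spanb b n u -> spanb b' n.+1 u.
  move=> u [c ->]; exists (fun l => if l == n then 0 else c l).
  rewrite big_ord_recr /= eqxx scale0r addr0; apply: eq_bigr => l _.
  by rewrite /b' (ltn_eqF (ltn_ord l)).
exists n.+1, b'; split; first by [].
split.
  move=> l; rewrite ltnS leq_eqVlt => /orP [/eqP ->|hl].
    by exists N; split => //; rewrite /b' eqxx.
  by have [i [hi e]] := hb l hl; exists i; split; [apply: ltnW|rewrite /b' (ltn_eqF hl)].
split.
  move=> c; rewrite big_ord_recr /= /b' eqxx.
  have -> : \sum_(i < n) c (widen_ord (leqnSn n) i) *: (if (widen_ord (leqnSn n) i : nat) == n then v N else b (widen_ord (leqnSn n) i)) = \sum_(i < n) c i *: b i.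
    by apply: eq_bigr => l _; rewrite /= (ltn_eqF (ltn_ord l)).
  move=> e.
  have cn : c n = 0.
    apply/eqP; apply/negPn/negP => hc; apply: hv.
    apply: (@sp_solve _ _ _ _ (c n) (v N) 0 (\sum_(i < n) c i *: b i)) => //.
    - by rewrite subr0 addrC.
    - exact: sp0.
    - by exists c.
  rewrite cn scale0r addr0 in e.
  move=> l; rewrite ltnS leq_eqVlt => /orP [/eqP -> //|hl]; exact: hind.
move=> i; rewrite ltnS leq_eqVlt => /orP [/eqP ->|hi].
  by have := @sp_b _ _ b' n.+1 n (ltnSn n); rewrite /b' eqxx.
by apply: hext; apply: hsp.
Qed.

Definition win (F : fieldType) (M : lmodType F) (a : int -> M) (lo : int) (N : nat) :=
  spanb (fun i : nat => a (lo + i%:Z)) N.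

Lemma win_a (F : fieldType) (M : lmodType F) (a : int -> M) lo N j :
  lo <= j -> j < lo + N%:Z -> win a lo N (a j).
Proof.
move=> h1 h2; have [hl e] : ((`|j - lo|%N < N)%N /\ j = lo + (`|j - lo|%N)%:Z) by lia.
rewrite [in a j]e; exact: (@sp_b _ _ (fun i : nat => a (lo + i%:Z))).
Qed.

Lemma win_f (F : fieldType) (M : lmodType F) (a : int -> M) (h : M -> M) lo lo' N u :
  lin h -> (forall i : nat, h (a (lo + i%:Z)) = a (lo' + i%:Z)) ->
  win a lo N u -> win a lo' N (h u).
Proof.
move=> hl ha [c ->]; exists c; rewrite lin_sum //; apply: eq_bigr => i _.
by rewrite linZ // ha.
Qed.

Lemma adim_win (F : fieldType) (M : lmodType F) (a : int -> M) lo N :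
  (forall j, win a lo N (a j)) -> adim_le a N.
Proof.
move=> hw; have [n [b [hn [hb [hind hsp]]]]] := extract (fun i : nat => a (lo + i%:Z)) N.
exists n; split => //; exists (fun l : 'I_n => b l); split.
  move=> c e l.
  pose c' := fun i : nat => if @insub _ (fun i => (i < n)%N) _ i is Some l' then c l' else 0.
  have := hind c'; rewrite /c'.
  have -> : \sum_(l0 < n) (if @insub _ (fun i => (i < n)%N) 'I_n l0 is Some l' then c l' else 0) *: b l0 = \sum_(l0 < n) c l0 *: b l0.
    by apply: eq_bigr => l0 _; rewrite valK.
  by move=> /(_ e l (ltn_ord l)); rewrite valK.
split.
  move=> l; have [i [_ ->]] := hb l (ltn_ord l).
  by exists [:: lo + i%:Z], (fun _ => 1); rewrite big_seq1 scale1r.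
move=> j; have [c ->] := sp_trans hsp (hw j).
by exists (fun l : 'I_n => c l).
Qed.

Lemma adim_rel (F : fieldType) (M : lmodType F) (a : int -> M) (f g : M -> M) lo N :
  lin f -> lin g -> (forall j, f (a j) = a (1 + j)) -> (forall j, g (a j) = a (j - 1)) ->
  (0 < N)%N ->
  win a lo N (a (lo + N%:Z)) -> win a (lo + 1) N (a lo) -> adim_le a N.
Proof.
move=> lf lg hf hg hN hfw hbw.
have fw : forall m : nat, win a (lo + m%:Z) N (a (lo + N%:Z + m%:Z)).
  elim=> [|m IH]; first by rewrite !addr0.
  have := win_f lf (lo' := lo + m.+1%:Z) _ IH; rewrite hf.
  have -> : 1 + (lo + N%:Z + m%:Z) = lo + N%:Z + m.+1%:Z by lia.
  apply => i; rewrite hf; congr a; lia.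
have bw : forall m : nat, win a (lo + 1 - m%:Z) N (a (lo - m%:Z)).
  elim=> [|m IH]; first by rewrite !subr0.
  have := win_f lg (lo' := lo + 1 - m.+1%:Z) _ IH; rewrite hg.
  have -> : lo - m%:Z - 1 = lo - m.+1%:Z by lia.
  apply => i; rewrite hg; congr a; lia.
have main : forall n : nat, forall j, (lo - n%:Z <= j) && (j < lo + N%:Z + n%:Z) -> win a lo N (a j).
  elim=> [|n IH] j.
    rewrite subr0 addr0 => /andP [h1 h2]; exact: win_a.
  move=> hj.
  have [e|[e|hj']] : (j = lo + N%:Z + n%:Z) \/ (j = lo - n%:Z - 1) \/ ((lo - n%:Z <= j) && (j < lo + N%:Z + n%:Z)) by lia.
  - rewrite e; apply: (sp_trans _ (fw n)) => i hi; apply: IH; lia.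
  - have := bw n.+1.
    have -> : lo + 1 - n.+1%:Z = lo - n%:Z by lia.
    have -> : lo - n.+1%:Z = j by lia.
    move=> hw; apply: (sp_trans _ hw) => i hi; apply: IH; lia.
  - exact: IH.
apply: (adim_win (lo := lo)) => j; apply: (main `|j - lo|%N); lia.
Qed.

Lemma I2 (F : fieldType) (M : lmodType F) (al : nat -> F) (G : nat -> M) n :
  G 0%N = 0 ->
  al n *: G n.+1 + al n.+1 *: G n + \sum_(1 <= i < n.+1) (al i.-1 - al i.+1) *: G i
  = \sum_(1 <= i < n.+1) al i *: (G i.+1 - G i.-1) + al 0%N *: G 1%N.
Proof.
move=> G0; elim: n => [|n IH]; first by rewrite !big_geq // G0; mring.
rewrite [in LHS]big_nat_recr // [in RHS]big_nat_recr //=; apply: (by_diff _ IH); mring.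
Qed.

Lemma I3 (F : fieldType) (M : lmodType F) (al : nat -> F) (G : nat -> M) n :
  \sum_(1 <= i < n.+1) al i *: (G i - G i.-1) + al 0%N *: G 0%N
  = al n *: G n + \sum_(0 <= i < n) (al i - al i.+1) *: G i.
Proof.
elim: n => [|n IH]; first by rewrite !big_geq //; mring.
rewrite [in LHS]big_nat_recr // [in RHS]big_nat_recr //=; apply: (by_diff _ IH); mring.
Qed.

Lemma I1 (F : fieldType) (M : lmodType F) (d : nat -> F) (G : nat -> M) n :
  G 0%N = 0 -> d 0%N = 0 ->
  \sum_(1 <= i < n.+1) d i *: (G i.-1 + G i + G i.+1)
  = \sum_(1 <= i < n.+1) (d i.-1 + d i + d i.+1) *: G i + d n *: G n.+1 - d n.+1 *: G n.
Proof.
move=> G0 d0; elim: n => [|n IH]; first by rewrite !big_geq // G0 d0; mring.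
rewrite [in LHS]big_nat_recr // [in RHS]big_nat_recr //=; apply: (by_diff _ IH); mring.
Qed.

Lemma subC (F : fieldType) (M : lmodType F) (S : M -> Prop) c u v :
  is_subspace S -> S u -> S v -> S (c *: u + v).
Proof. by move=> [h0 [hD hZ]] hu hv; apply: hD => //; apply: hZ. Qed.
Lemma subB (F : fieldType) (M : lmodType F) (S : M -> Prop) u v :
  is_subspace S -> S u -> S v -> S (u - v).
Proof. by move=> hS hu hv; rewrite -scaleN1r addrC; apply: subC. Qed.

Lemma miy_uniq (F : fieldType) (M : lmodType F) (mul : M -> M -> M) eta a0 W u w1 w2 :
  is_axis mul eta a0 W -> miyamoto W u w1 -> miyamoto W u w2 -> w1 = w2.
Proof.
move=> [hsub [_ [huniq _]]] [u0 [u1 [u2 [u3 [[h0 h1 h2 h3] [eu ->]]]]]]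
  [v0 [v1 [v2 [v3 [[k0 k1 k2 k3] [ev ->]]]]]].
have := huniq (u0 - v0) (u1 - v1) (u2 - v2) (u3 - v3).
case.
- by apply: subB => //; apply: hsub.
- by apply: subB => //; apply: hsub.
- by apply: subB => //; apply: hsub.
- by apply: subB => //; apply: hsub.
- have -> : u0 - v0 + (u1 - v1) + (u2 - v2) + (u3 - v3) = (u0 + u1 + u2 + u3) - (v0 + v1 + v2 + v3) by mring.
  by rewrite -eu -ev subrr.
move=> /eqP; rewrite subr_eq0 => /eqP ->.
move=> /eqP; rewrite subr_eq0 => /eqP ->.
move=> /eqP; rewrite subr_eq0 => /eqP ->.
move=> /eqP; rewrite subr_eq0 => /eqP ->.
by [].
Qed.

Lemma miy_lin (F : fieldType) (M : lmodType F) (mul : M -> M -> M) eta a0 W c u v w w' :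
  is_axis mul eta a0 W -> miyamoto W u w -> miyamoto W v w' ->
  miyamoto W (c *: u + v) (c *: w + w').
Proof.
move=> [hsub _] [u0 [u1 [u2 [u3 [[h0 h1 h2 h3] [-> ->]]]]]]
  [v0 [v1 [v2 [v3 [[k0 k1 k2 k3] [-> ->]]]]]].
exists (c *: u0 + v0), (c *: u1 + v1), (c *: u2 + v2), (c *: u3 + v3).
split; first by split; apply: subC => //; apply: hsub.
split; mring.
Qed.

Lemma zero_diff (F : fieldType) (M : lmodType F) (u v w : M) :
  u = v - w -> v = 0 -> w = 0 -> u = 0.
Proof. by move=> -> -> ->; rewrite subrr. Qed.
Lemma diff_split (F : fieldType) (M : lmodType F) (A A' p p' : M) :
  (A + p) - (A' + p') = (A - A') + (p - p').
Proof. mring. Qed.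
Lemma zero_sum3 (F : fieldType) (M : lmodType F) (u v w t : M) :
  u = v + w + t -> v = 0 -> w = 0 -> t = 0 -> u = 0.
Proof. by move=> -> -> -> ->; rewrite !addr0. Qed.

Unset Implicit Arguments.

Theorem lemma2 (F : fieldType) (M : lmodType F) (mul : M -> M -> M) (eta : F)
    (a : int -> M) (V : int -> nat -> M -> Prop)
    (hmul : comm_bilinear mul)
    (hchar : (2%:R : F) != 0)
    (heta0 : eta != 0) (heta1 : eta != 1) (heta2 : eta != 2%:R^-1)
    (hdih : dihedral mul eta a V)
    (f1 f2 f3 tau0 : M -> M)
    (hf1 : is_auto mul f1) (hf1a : forall j, f1 (a j) = a (1 + j))
    (hf2 : is_auto mul f2) (hf2a : forall j, f2 (a j) = a (2 + j))
    (hf3 : is_auto mul f3) (hf3a : forall j, f3 (a j) = a (3 + j))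
    (htau0 : forall u, miyamoto (V 0) u (tau0 u))
    (x y z : M) (k : nat) (alpha : nat -> F)
    (halpha : forall i, (k < i)%N -> alpha i = 0)
    (hx : forall g, in_gen_group (fun h => h = f1 \/ h = tau0) g -> g x = x)
    (hy : [/\ f3 y = y, tau0 (f1 y) = f2 y & tau0 y = y])
    (hz : tau0 z = z /\ tau0 (f1 z) = f1 z)
    (hrel : x + y + z + \sum_(1 <= i < k.+1) alpha i *: (a (i%:Z) + a (- i%:Z))
              + alpha 0%N *: a 0 = 0) :
  (* (1) ; alpha_{i-2} for i = 1 is alpha_{-1} := alpha_1 *)
  ((alpha k *: (a (k%:Z + 2) - a (- (k%:Z + 2)))
     + \sum_(1 <= i < k.+2)
         (alpha (if i == 1%N then 1%N else (i - 2)%N) + alpha i.-1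
            - alpha i.+1 - alpha i.+2) *: (a (i%:Z) - a (- i%:Z)) = 0)
   /\ (alpha k != 0 ->
        adim_le a (2 * k + 4) /\ (adim_is a (2 * k + 4) -> odd_relation a)))
  /\
  (* (2) *)
  (y = 0 ->
   (alpha k *: (a (k%:Z + 1) - a (- (k%:Z + 1)))
     + \sum_(1 <= i < k.+1) (alpha i.-1 - alpha i.+1) *: (a (i%:Z) - a (- i%:Z)) = 0)
   /\ (alpha k != 0 ->
        adim_le a (2 * k + 2) /\ (adim_is a (2 * k + 2) -> odd_relation a)))
  /\
  (* (3) *)
  (y = 0 -> z = 0 ->
   (alpha k *: (a (k%:Z + 1) - a (- k%:Z))
     + \sum_(0 <= i < k) (alpha i - alpha i.+1) *: (a (i%:Z + 1) - a (- i%:Z)) = 0)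
   /\ (alpha k != 0 ->
        adim_le a (2 * k + 1) /\ (adim_is a (2 * k + 1) -> odd_relation a))).

Proof.
case: hdih => hgen _ hax hmiy.
have ax0 := hax 0.
have tau_a : forall i, tau0 (a i) = a (- i).
  move=> i; apply: (miy_uniq ax0 (htau0 (a i))).
  by have := hmiy i 0; rewrite mulr0 sub0r.
have ltau : lin tau0.
  move=> c u v; apply: (miy_uniq ax0 (htau0 _)); apply: (miy_lin _ ax0); exact: htau0.
have lf1 : lin f1 by case: hf1.
have lf2 : lin f2 by case: hf2.
have lf3 : lin f3 by case: hf3.
have [g f1K gK] : bijective f1 by case: hf1 => _ [].
have lg : lin g.
  move=> c u v; apply: (can_inj f1K); by rewrite gK lf1 !gK.
have hga : forall j, g (a j) = a (j - 1).
  move=> j; have <- : f1 (a (j - 1)) = a j by rewrite hf1a; congr a; lia.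
  by rewrite f1K.
have hf1m : forall u v, f1 (mul u v) = mul (f1 u) (f1 v) by case: hf1 => _ [].
have hf2m : forall u v, f2 (mul u v) = mul (f2 u) (f2 v) by case: hf2 => _ [].
have hf3m : forall u v, f3 (mul u v) = mul (f3 u) (f3 v) by case: hf3 => _ [].
have f11 : forall u, f1 (f1 u) = f2 u.
  apply: (hgen (fun u => f1 (f1 u) = f2 u)).
  - split; first by rewrite !lin0.
    split; first by move=> u v e1 e2; rewrite !linD // e1 e2.
    by move=> c u e; rewrite !linZ // e.
  - by move=> u v e1 e2; rewrite !hf1m hf2m e1 e2.
  - by move=> i; rewrite !hf1a hf2a; congr a; lia.
have f12 : forall u, f1 (f2 u) = f3 u.
  apply: (hgen (fun u => f1 (f2 u) = f3 u)).
  - split; first by rewrite !lin0.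
    split; first by move=> u v e1 e2; rewrite !linD // e1 e2.
    by move=> c u e; rewrite !linZ // e.
  - by move=> u v e1 e2; rewrite hf2m hf1m hf3m e1 e2.
  - by move=> i; rewrite hf2a hf1a hf3a; congr a; lia.
have hx1 : f1 x = x by apply: hx; apply: gg_gen; left.
have hxt : tau0 x = x by apply: hx; apply: gg_gen; right.
case: hy => hy3 hy2 hy0.
case: hz => hz0 hz1.
set S := \sum_(1 <= i < k.+1) alpha i *: (a i%:Z + a (- i%:Z)) + alpha 0%N *: a 0.
have hS : x + y + z + S = 0 by rewrite /S addrA; exact: hrel.
have e1 : x + f1 y + f1 z + f1 S = 0.
  by have := congr1 f1 hS; rewrite !(linD _ _ lf1) hx1 (lin0 lf1).
have e2 : x + f2 y + f1 z + tau0 (f1 S) = 0.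
  by have := congr1 tau0 e1; rewrite !(linD _ _ ltau) hxt hy2 hz1 (lin0 ltau).
have E : f1 y - f2 y + (f1 S - tau0 (f1 S)) = 0.
  by apply: (zero_diff _ e1 e2); mring.
pose B := fun n : nat => a n%:Z - a (- n%:Z).
have hf1S : f1 S = \sum_(1 <= i < k.+1) alpha i *: (a (1 + i%:Z) + a (1 + - i%:Z)) + alpha 0%N *: a (1 + 0).
  rewrite /S (linD _ _ lf1) (lin_sum _ _ _ lf1) (linZ _ _ lf1) hf1a; congr (_ + _); apply: eq_bigr => i _.
  by rewrite (linZ _ _ lf1) (linD _ _ lf1) !hf1a.
have htS : tau0 (f1 S) = \sum_(1 <= i < k.+1) alpha i *: (a (- (1 + i%:Z)) + a (- (1 + - i%:Z))) + alpha 0%N *: a (- (1 + 0)).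
  rewrite hf1S (linD _ _ ltau) (lin_sum _ _ _ ltau) (linZ _ _ ltau) tau_a; congr (_ + _); apply: eq_bigr => i _.
  by rewrite (linZ _ _ ltau) (linD _ _ ltau) !tau_a.
have Dval : f1 S - tau0 (f1 S) = \sum_(1 <= i < k.+1) alpha i *: (B i.+1 - B i.-1) + alpha 0%N *: B 1%N.
  rewrite htS hf1S diff_split -sumrB; congr (_ + _).
    apply: eq_big_nat => i /andP [hi _]; rewrite /B.
    rewrite (_ : 1 + i%:Z = i.+1%:Z); last by lia.
    rewrite (_ : 1 + - i%:Z = - (i.-1)%:Z); last by lia.
    rewrite opprK; mring.
  rewrite /B (_ : 1 + 0 = (1%N)%:Z) //; mring.
have rel2 : alpha k *: B k.+1 + \sum_(1 <= i < k.+1) (alpha i.-1 - alpha i.+1) *: B i = f1 S - tau0 (f1 S).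
  rewrite Dval -(@I2 _ _ alpha B k); last by rewrite /B oppr0 subrr.
  by rewrite (halpha k.+1) // scale0r addr0.
have W : (f1 S - tau0 (f1 S)) + f1 (f1 S - tau0 (f1 S)) + f1 (f1 (f1 S - tau0 (f1 S))) = 0.
  have E' := congr1 f1 E.
  rewrite (linD _ _ lf1) (linB _ _ lf1) f11 f12 hy3 (lin0 lf1) in E'.
  have E'' := congr1 f1 E'.
  rewrite (linD _ _ lf1) (linB _ _ lf1) f12 f11 hy3 (lin0 lf1) in E''.
  by apply: (zero_sum3 _ E E' E''); rewrite f11; mring.
have Wg : g (f1 S - tau0 (f1 S)) + (f1 S - tau0 (f1 S)) + f1 (f1 S - tau0 (f1 S)) = 0.
  by have := congr1 g W; rewrite !(linD _ _ lg) !f1K (lin0 lg).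
pose dl := fun i : nat => if i is 0%N then 0 else alpha i.-1 - alpha i.+1.
have Dd : f1 S - tau0 (f1 S) = \sum_(1 <= i < k.+2) dl i *: B i.
  rewrite -rel2 [in RHS]big_nat_recr //= (halpha k.+2) // subr0 addrC; congr (_ + _).
  by apply: eq_big_nat => -[|i] //.
have hD3 : g (f1 S - tau0 (f1 S)) + (f1 S - tau0 (f1 S)) + f1 (f1 S - tau0 (f1 S))
    = \sum_(1 <= i < k.+2) dl i *: (B i.-1 + B i + B i.+1).
  rewrite Dd (lin_sum _ _ _ lg) (lin_sum _ _ _ lf1) -!big_split; apply: eq_big_nat => i /andP [hi _].
  rewrite (linZ _ _ lg) (linZ _ _ lf1) /B (linB _ _ lg) (linB _ _ lf1) !hga !hf1a.
  rewrite (_ : i%:Z - 1 = (i.-1)%:Z); last by lia.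
  rewrite (_ : - i%:Z - 1 = - (i.+1)%:Z); last by lia.
  rewrite (_ : 1 + i%:Z = (i.+1)%:Z); last by lia.
  rewrite (_ : 1 + - i%:Z = - (i.-1)%:Z); last by lia.
  mring.
have rel1 : alpha k *: (a (k%:Z + 2) - a (- (k%:Z + 2)))
     + \sum_(1 <= i < k.+2)
         (alpha (if i == 1%N then 1%N else (i - 2)%N) + alpha i.-1
            - alpha i.+1 - alpha i.+2) *: (a (i%:Z) - a (- i%:Z)) = 0.
  apply: (etrans _ Wg); rewrite hD3 (@I1 _ _ dl B k.+1); last by []; last by rewrite /B oppr0 subrr.
  have -> : dl k.+2 = 0 by rewrite /= (halpha k.+1) ?(halpha k.+3) ?subrr //; lia.
  have -> : dl k.+1 = alpha k by rewrite /= (halpha k.+2) ?subr0 //; lia.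
  rewrite scale0r subr0 [RHS]addrC (_ : k%:Z + 2 = (k.+2)%:Z); last by lia.
  congr (_ + _); apply: eq_big_nat => -[|[|i]] // _ /=.
    by congr (_ *: _); ring.
  by rewrite (_ : (i.+2 - 2)%N = i); [congr (_ *: _); ring | lia].
split.
  split; first exact: rel1.
  move=> ak; split.
    apply: (adim_rel (lo := - (k%:Z + 2)) lf1 lg hf1a hga); first by lia.
    - have -> : - (k%:Z + 2) + (2 * k + 4)%N%:Z = k%:Z + 2 by lia.
      apply: (sp_solve ak rel1); first by apply: win_a; lia.
      by apply: sp_sum_nat => i /andP [h1 h2]; apply: spZ; apply: spB; apply: win_a; lia.
    - apply: (sp_solve' ak rel1); first by apply: win_a; lia.
      by apply: sp_sum_nat => i /andP [h1 h2]; apply: spZ; apply: spB; apply: win_a; lia.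
  move=> hadim; left; exists k.+2; split => //; split.
    by rewrite (_ : (2 * k.+2 = 2 * k + 4)%N) //; lia.
  exists (fun i => if i == k.+2 then alpha k else (alpha (if i == 1%N then 1%N else (i - 2)%N) + alpha i.-1 - alpha i.+1 - alpha i.+2)).
  split; first by rewrite eqxx.
  apply: (etrans _ rel1); rewrite big_nat_recr //= eqxx [LHS]addrC (_ : k%:Z + 2 = k.+2%:Z); last by lia.
  congr (_ + _); apply: eq_big_nat => i /andP [_ hi]; by rewrite (ltn_eqF hi).
split.
  move=> y0.
  have D0 : f1 S - tau0 (f1 S) = 0.
    by move: E; rewrite y0 (lin0 lf1) (lin0 lf2) subrr add0r.
  have rel2' : alpha k *: (a (k%:Z + 1) - a (- (k%:Z + 1))) + \sum_(1 <= i < k.+1) (alpha i.-1 - alpha i.+1) *: (a i%:Z - a (- i%:Z)) = 0.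
    rewrite (_ : k%:Z + 1 = k.+1%:Z); last by lia.
    exact: (etrans rel2 D0).
  split; first exact: rel2'.
  move=> ak; split.
    apply: (adim_rel (lo := - (k%:Z + 1)) lf1 lg hf1a hga); first by lia.
    - have -> : - (k%:Z + 1) + (2 * k + 2)%N%:Z = k%:Z + 1 by lia.
      apply: (sp_solve ak rel2'); first by apply: win_a; lia.
      by apply: sp_sum_nat => i /andP [h1 h2]; apply: spZ; apply: spB; apply: win_a; lia.
    - apply: (sp_solve' ak rel2'); first by apply: win_a; lia.
      by apply: sp_sum_nat => i /andP [h1 h2]; apply: spZ; apply: spB; apply: win_a; lia.
  move=> hadim; left; exists k.+1; split => //; split.
    by rewrite (_ : (2 * k.+1 = 2 * k + 2)%N) //; lia.
  exists (fun i => if i == k.+1 then alpha k else alpha i.-1 - alpha i.+1).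
  split; first by rewrite eqxx.
  apply: (etrans _ rel2'); rewrite big_nat_recr //= eqxx [LHS]addrC (_ : k%:Z + 1 = k.+1%:Z); last by lia.
  congr (_ + _); apply: eq_big_nat => i /andP [_ hi]; by rewrite (ltn_eqF hi).
move=> y0 z0.
have D3 : f1 S - S = 0.
  apply: (zero_diff _ e1 hS); rewrite y0 z0 (lin0 lf1); mring.
pose C := fun n : nat => a (n%:Z + 1) - a (- n%:Z).
have D3val : f1 S - S = \sum_(1 <= i < k.+1) alpha i *: (C i - C i.-1) + alpha 0%N *: C 0%N.
  rewrite hf1S /S diff_split -sumrB; congr (_ + _).
    apply: eq_big_nat => i /andP [hi _]; rewrite /C.
    rewrite (_ : 1 + i%:Z = i%:Z + 1); last by lia.
    rewrite (_ : (i.-1)%:Z + 1 = i%:Z); last by lia.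
    rewrite (_ : 1 + - i%:Z = - (i.-1)%:Z); last by lia.
    mring.
  rewrite /C (_ : (1 + 0 : int) = (0%N)%:Z + 1); last by lia.
  rewrite (_ : - (0%N)%:Z = 0) //; mring.
have rel3 : alpha k *: (a (k%:Z + 1) - a (- k%:Z)) + \sum_(0 <= i < k) (alpha i - alpha i.+1) *: (a (i%:Z + 1) - a (- i%:Z)) = 0.
  by apply: (etrans _ D3); rewrite D3val (@I3 _ _ alpha C k).
split; first exact: rel3.
move=> ak; split.
  apply: (adim_rel (lo := - k%:Z) lf1 lg hf1a hga); first by lia.
  - have -> : - k%:Z + (2 * k + 1)%N%:Z = k%:Z + 1 by lia.
    apply: (sp_solve ak rel3); first by apply: win_a; lia.
    by apply: sp_sum_nat => i /andP [h1 h2]; apply: spZ; apply: spB; apply: win_a; lia.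
  - apply: (sp_solve' ak rel3); first by apply: win_a; lia.
    by apply: sp_sum_nat => i /andP [h1 h2]; apply: spZ; apply: spB; apply: win_a; lia.
move=> hadim; right; exists k; split.
  by rewrite (_ : ((2 * k).+1 = 2 * k + 1)%N) //; lia.
exists (fun i => if i == k then alpha k else alpha i - alpha i.+1).
split; first by rewrite eqxx.
apply: (etrans _ rel3); rewrite big_nat_recr //= eqxx [LHS]addrC.
congr (_ + _); apply: eq_big_nat => i /andP [_ hi]; by rewrite (ltn_eqF hi).
Qed.
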